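(* Let $\{\alpha_n\}_{n\ge0}$ be a sequence of positive reals and define $\gamma_0=1$, $\gamma_n=1+\sum_{i=0}^{n-1}\alpha_i$ for $n\ge1$. Suppose $\lim_{n\to\infty}\alpha_n=0$, $\limsup_{n\to\infty}|\alpha_{n+1}^{-1}-\alpha_n^{-1}|<\infty$, $\sum_{n=0}^\infty\alpha_n=\infty$, and there exists $r\in(1,\infty)$ with $\sum_{n=0}^\infty\alpha_n^2\gamma_n^{2r}<\infty$. Then there exists a real number $s\in(0,1)$ such that $\sum_{n=0}^\infty\alpha_n^{1+s}\gamma_n^r<\infty$. *)

(* Defs.v *)
From Stdlib Require Import Reals.
From Coquelicot Require Import Coquelicot.
Open Scope R_scope.

Definition gam (alpha : nat -> R) (n : nat) : R :=
  match n with
  | O => 1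
  | S m => 1 + sum_n alpha m
  end.

(* Main.v *)
Require Import Defs.
From Stdlib Require Import Reals Lra Lia.
From Coquelicot Require Import Coquelicot.
Open Scope R_scope.

Lemma gamS (alpha : nat -> R) n : gam alpha (S n) = gam alpha n + alpha n.
Proof.
  destruct n as [|m]; simpl.
  - rewrite sum_O. reflexivity.
  - rewrite sum_Sn. unfold plus; simpl. ring.
Qed.

Lemma gam_ge1 (alpha : nat -> R) (Hpos : forall n, 0 < alpha n) n : 1 <= gam alpha n.
Proof.
  induction n. simpl; lra. rewrite gamS. specialize (Hpos n). lra.
Qed.

Lemma exp_mix (s A B : R) : 0 < s < 1 -> exp (s * A + (1 - s) * B) <= exp A + exp B.
Proof.
  intros Hs.
  assert (HA := exp_pos A). assert (HB := exp_pos B).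
  destruct (Rle_lt_dec A B) as [H|H].
  - assert (s * A + (1 - s) * B <= B) by nra.
    destruct H0 as [H0|H0]. apply exp_increasing in H0. lra. rewrite H0; lra.
  - assert (s * A + (1 - s) * B < A) by nra.
    apply exp_increasing in H0. lra.
Qed.

Theorem lemma2p2 (alpha : nat -> R) (r : R)
  (Hpos : forall n, 0 < alpha n)
  (Hlim : is_lim_seq alpha 0)
  (Hlimsup : Rbar_lt (LimSup_seq (fun n => Rabs (/ alpha (S n) - / alpha n))) p_infty)
  (Hdiv : is_lim_seq (sum_n alpha) p_infty)
  (Hr1 : 1 < r)
  (Hr : ex_series (fun n => (alpha n) ^ 2 * Rpower (gam alpha n) (2 * r))) :
  exists s : R, 0 < s < 1 /\
    ex_series (fun n => Rpower (alpha n) (1 + s) * Rpower (gam alpha n) r).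
Proof.
  set (gg := gam alpha).
  assert (Hg : forall n, 1 <= gg n) by (intro; apply gam_ge1; auto).
  set (s := (r + 2) / (2 * r + 2)).
  assert (Hs : 0 < s < 1).
  { unfold s; split. apply Rdiv_lt_0_compat; lra.
    apply Rmult_lt_reg_r with (2*r+2). lra. unfold Rdiv. rewrite Rmult_assoc, Rinv_l by lra. lra. }
  exists s; split; [exact Hs|].
  assert (Hb : forall n, Rpower (alpha n) (1 + s) * Rpower (gg n) r
                 <= alpha n ^ 2 * Rpower (gg n) (2 * r) + alpha n / (gg n ^ 2)).
  { intro n. specialize (Hg n). assert (Ha := Hpos n).
    set (la := ln (alpha n)). set (lg := ln (gg n)).
    assert (E1 : Rpower (alpha n) (1 + s) * Rpower (gg n) r
                 = exp (s * (2 * la + 2 * r * lg) + (1 - s) * (la - 2 * lg))).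
    { unfold Rpower. rewrite <- exp_plus. f_equal. fold la lg. unfold s. field. lra. }
    assert (E2 : alpha n ^ 2 * Rpower (gg n) (2 * r) = exp (2 * la + 2 * r * lg)).
    { unfold Rpower. rewrite exp_plus. fold lg. f_equal.
      replace (2 * la) with (la + la) by ring. rewrite exp_plus. unfold la.
      rewrite exp_ln by lra. ring. }
    assert (E3 : alpha n / (gg n ^ 2) = exp (la - 2 * lg)).
    { unfold Rminus. rewrite exp_plus, exp_Ropp.
      replace (2 * lg) with (lg + lg) by ring. rewrite exp_plus. unfold la, lg.
      rewrite !exp_ln by lra. field. lra. }
    rewrite E1, E2, E3. apply exp_mix; exact Hs. }
  assert (Htel : ex_series (fun n => / gg n - / gg (S n))).
  { exists (1 - 0).
    unfold is_series.
    assert (Hlim2 : is_lim_seq (fun N => / gg 0%nat - / gg (S N)) (1 - 0)).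
    { apply is_lim_seq_minus'. replace (/ gg 0%nat) with 1 by (simpl; field).
      apply is_lim_seq_const.
      replace (Finite 0) with (Rbar_inv p_infty) by reflexivity.
      apply is_lim_seq_inv; [|discriminate].
      unfold gg; simpl.
      eapply is_lim_seq_plus. apply is_lim_seq_const. exact Hdiv. reflexivity. }
    assert (HS : forall N, sum_n (fun n => / gg n - / gg (S n)) N = / gg 0%nat - / gg (S N)).
    { induction N. rewrite sum_O. reflexivity.
      rewrite sum_Sn, IHN. unfold plus; simpl. ring. }
    eapply filterlim_ext; [|exact Hlim2]. intro N; simpl. now rewrite HS. }
  apply is_lim_seq_spec in Hlim.
  destruct (Hlim (mkposreal 1 Rlt_0_1)) as [N HN]. simpl in HN.
  assert (Hq : ex_series (fun n => alpha n / (gg n ^ 2))).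
  { apply (ex_series_incr_n _ N).
    apply (ex_series_incr_n _ N) in Htel.
    apply (@ex_series_le R_AbsRing R_CompleteNormedModule _ (fun k => 2 * (/ gg (N + k)%nat - / gg (S (N + k))))).
    - intro k. specialize (HN (N + k)%nat ltac:(lia)).
      rewrite Rminus_0_r in HN.
      assert (Ha := Hpos (N + k)%nat). assert (Hgk := Hg (N + k)%nat).
      change (gg (S (N + k))) with (gam alpha (S (N + k))). rewrite gamS. fold gg.
      rewrite Rabs_right in HN by lra.
      assert (0 < alpha (N + k)%nat / gg (N + k)%nat ^ 2).
      { apply Rdiv_lt_0_compat; nra. }
      change (abs ?z) with (Rabs z). replace (gg (N + k)%nat * (gg (N + k)%nat * 1)) with (gg (N + k)%nat ^ 2) by ring. rewrite Rabs_right by lra.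
      set (a := alpha (N + k)%nat) in *. set (x := gg (N + k)%nat) in *.
      assert (2 * (/ x - / (x + a)) - a / x ^ 2 = a * (x - a) / (x^2 * (x + a))) by (field; lra).
      assert (0 <= a * (x - a) / (x^2 * (x + a))).
      { apply Rle_mult_inv_pos. nra. nra. }
      lra.
    - apply (ex_series_scal_l 2) in Htel. exact Htel. }
  apply (@ex_series_le R_AbsRing R_CompleteNormedModule _ (fun n => alpha n ^ 2 * Rpower (gg n) (2 * r) + alpha n / (gg n ^ 2))).
  - intro n. change (norm ?z) with (Rabs z). rewrite Rabs_right. apply Hb.
    apply Rle_ge, Rmult_le_pos; unfold Rpower; left; apply exp_pos.
  - apply (ex_series_plus _ _ Hr Hq).
Qed.
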